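(* Let $m\in\{1,2\}$, $K>0$, $\gamma=3$, and let $(\rho,u)$ be a smooth solution ($\rho>0$, $r>0$) of the radially symmetric isentropic Euler equations $$(r^m\rho)_t+(r^m\rho u)_r=0,\qquad (r^m\rho u)_t+(r^m\rho u^2)_r+r^m p_r=0,\qquad p=K\rho^\gamma,$$ in the supersonic inward regime $c_1<c_2<0$. Then: (i) If the 1-wave is rarefaction (R), the 2-wave can only change from R to compression (C); if the 2-wave is R, the 1-wave can only change from R to C. (ii) If the 1-wave is C, the 2-wave can only change from C to R; if the 2-wave is C, the 1-wave can only change from C to R.
   Context: Here $h=\sqrt{K\gamma}\,\rho^{(\gamma-1)/2}$, $c_1=u-h$, $c_2=u+h$, and $$\alpha=u_r+\tfrac{2}{\gamma-1}h_r+\tfrac{m}{r}\tfrac{hu}{c_2},\qquad \beta=u_r-\tfrac{2}{\gamma-1}h_r-\tfrac{m}{r}\tfrac{hu}{c_1}.$$ The 1-wave is rarefaction (compression) at a point if $\beta>0$ ($\beta<0$); the 2-wave is rarefaction (compression) if $\alpha>0$ ($\alpha<0$). Characteristic flow maps: $\partial_t\xi(r_0,t)=c_1(\xi(r_0,t),t)$, $\partial_t\psi(r_0,t)=c_2(\psi(r_0,t),t)$, $\xi(r_0,0)=\psi(r_0,0)=r_0$. A change of the 2-wave from C to R means there are $r_0,t^*,\varepsilon>0$ such that $g(t)=\alpha(\psi(r_0,t),t)$ satisfies $g(t^* )=0$, $g<0$ on $(t^*-\varepsilon,t^* )$, $g>0$ on $(t^*,t^*+\varepsilon)$ (from R to C: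 opposite signs); a change of the 1-wave is defined likewise with $\beta(\xi(r_0,t),t)$. ''If the 1-wave is R then the 2-wave can only change from R to C'' means no C-to-R change of the 2-wave occurs at a time $t^*$ where the 1-wave is R at the crossing point; the other items are interpreted analogously. *)

(* Defs.v *)
From Stdlib Require Import Reals List.
From Coquelicot Require Import Coquelicot.
Open Scope R_scope.

Definition Dr (f : R -> R -> R) : R -> R -> R :=
  fun r t => Derive (fun s => f s t) r.
Definition Dt (f : R -> R -> R) : R -> R -> R :=
  fun r t => Derive (fun s => f r s) t.

Fixpoint Diter (l : list bool) (f : R -> R -> R) : R -> R -> R :=
  match l with
  | nil => f
  | b :: l' => (if b then Dr else Dt) (Diter l' f)
  end.

Definition open_domain (Om : R -> R -> Prop) : Prop :=
  open (fun p : R * R => Om (fst p) (snd p)).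

Definition smooth_on (Om : R -> R -> Prop) (f : R -> R -> R) : Prop :=
  forall (l : list bool) (r t : R), Om r t ->
    ex_derive (fun s => Diter l f s t) r /\
    ex_derive (fun s => Diter l f r s) t /\
    continuous (fun p : R * R => Diter l f (fst p) (snd p)) (r, t).

Definition pressure (K gamma : R) (rho : R -> R -> R) : R -> R -> R :=
  fun r t => K * Rpower (rho r t) gamma.

Definition euler_solution (m : nat) (K gamma : R) (Om : R -> R -> Prop)
    (rho u : R -> R -> R) : Prop :=
  forall r t, Om r t ->
    Dt (fun r t => r ^ m * rho r t) r t
      + Dr (fun r t => r ^ m * rho r t * u r t) r t = 0 /\
    Dt (fun r t => r ^ m * rho r t * u r t) r t
      + Dr (fun r t => r ^ m * rho r t * (u r t) ^ 2) r t
      + r ^ m * Dr (pressure K gamma rho) r t = 0.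

Definition hh (K gamma : R) (rho : R -> R -> R) : R -> R -> R :=
  fun r t => sqrt (K * gamma) * Rpower (rho r t) ((gamma - 1) / 2).
Definition speed1 (K gamma : R) (rho u : R -> R -> R) : R -> R -> R :=
  fun r t => u r t - hh K gamma rho r t.
Definition speed2 (K gamma : R) (rho u : R -> R -> R) : R -> R -> R :=
  fun r t => u r t + hh K gamma rho r t.

(** Wave-type indicators alpha (2-wave) and beta (1-wave). *)
Definition alpha (m : nat) (K gamma : R) (rho u : R -> R -> R) : R -> R -> R :=
  fun r t => Dr u r t + 2 / (gamma - 1) * Dr (hh K gamma rho) r t
             + INR m / r * (hh K gamma rho r t * u r t) / speed2 K gamma rho u r t.
Definition beta (m : nat) (K gamma : R) (rho u : R -> R -> R) : R -> R -> R :=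
  fun r t => Dr u r t - 2 / (gamma - 1) * Dr (hh K gamma rho) r t
             - INR m / r * (hh K gamma rho r t * u r t) / speed1 K gamma rho u r t.

Definition char_curve (c : R -> R -> R) (Om : R -> R -> Prop)
    (r0 a b : R) (X : R -> R) : Prop :=
  a < 0 < b /\ X 0 = r0 /\
  forall t, a < t < b -> Om (X t) t /\ is_derive X t (c (X t) t).

Definition change_C_to_R (g : R -> R) (tstar eps : R) : Prop :=
  0 < eps /\ g tstar = 0 /\
  (forall t, tstar - eps < t < tstar -> g t < 0) /\
  (forall t, tstar < t < tstar + eps -> 0 < g t).
Definition change_R_to_C (g : R -> R) (tstar eps : R) : Prop :=
  0 < eps /\ g tstar = 0 /\
  (forall t, tstar - eps < t < tstar -> 0 < g t) /\
  (forall t, tstar < t < tstar + eps -> g t < 0).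

(* Main.v *)
Require Import Defs.
From Stdlib Require Import Reals Lra List.
From Coquelicot Require Import Coquelicot.
Open Scope R_scope.

Lemma open_loc2d (Om : R -> R -> Prop) r t :
  open_domain Om -> Om r t -> locally_2d Om r t.
Proof.
  intros HO H. apply locally_2d_locally. apply (HO (r,t)). exact H.
Qed.

Lemma loc2d_impl (P Q : R -> R -> Prop) r t :
  (forall u v, P u v -> Q u v) -> locally_2d P r t -> locally_2d Q r t.
Proof.
  intros HPQ [d Hd]. exists d. intros; apply HPQ, Hd; auto.
Qed.

Lemma smooth_diff_n Om f : smooth_on Om f ->
  forall n l r t, Om r t -> ex_diff_n (Diter l f) n r t.
Proof.
  intros Hs n. induction n as [|n IH]; intros l r t H.
  - simpl. split; [|exact I].
    apply continuity_2d_pt_filterlim. apply (Hs l r t H).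
  - simpl. destruct (Hs l r t H) as [H1 [H2 H3]].
    split; [apply continuity_2d_pt_filterlim; exact H3|].
    split; [exact H1|]. split; [exact H2|]. split.
    + exact (IH (true :: l) r t H).
    + exact (IH (false :: l) r t H).
Qed.

Lemma DL1_diff f r t : DL_regular_n f 1 r t ->
  differentiable_pt_lim f r t (Dr f r t) (Dt f r t).
Proof.
  intros [D [d Hd]] eps.
  assert (Hp : 0 < eps / (Rabs D + 1)).
  { apply Rdiv_lt_0_compat. apply cond_pos. pose proof (Rabs_pos D); lra. }
  exists (mkposreal _ (Rmin_pos _ _ (cond_pos d) Hp)).
  intros u v Hu Hv. simpl in Hu, Hv.
  pose proof (Rmin_l d (eps / (Rabs D + 1))) as Hm1.
  pose proof (Rmin_r d (eps / (Rabs D + 1))) as Hm2.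
  specialize (Hd u v ltac:(lra) ltac:(lra)).
  assert (HP : DL_pol 1 f r t (u - r) (v - t) =
     f r t + (Dr f r t * (u - r) + Dt f r t * (v - t))).
  { unfold DL_pol, differential, partial_derive, Dr, Dt. simpl.
    unfold Binomial.C. simpl. field. }
  rewrite HP in Hd.
  set (M := Rmax (Rabs (u - r)) (Rabs (v - t))) in *.
  assert (HM0 : 0 <= M) by (unfold M; apply Rle_trans with (Rabs (u-r)); [apply Rabs_pos|apply Rmax_l]).
  assert (HM : M < eps / (Rabs D + 1)).
  { unfold M. apply Rmax_lub_lt; lra. }
  replace (f u v - f r t - (Dr f r t * (u - r) + Dt f r t * (v - t)))
    with (f u v - (f r t + (Dr f r t * (u - r) + Dt f r t * (v - t)))) by ring.
  eapply Rle_trans; [exact Hd|].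
  simpl. rewrite Rmult_1_r.
  assert (HD : D <= Rabs D) by apply RRle_abs.
  assert (HA : 0 <= Rabs D) by apply Rabs_pos.
  assert (Hk : (Rabs D + 1) * M <= eps).
  { apply Rlt_le. apply (Rmult_lt_compat_l (Rabs D + 1)) in HM; [|lra].
    assert (E : (Rabs D + 1) * (eps / (Rabs D + 1)) = eps) by (field; lra).
    lra. }
  assert (D * (M * M) <= Rabs D * M * M).
  { rewrite <- Rmult_assoc. apply Rmult_le_compat_r; [lra|]. apply Rmult_le_compat_r; lra. }
  assert (Rabs D * M * M <= eps * M).
  { apply Rmult_le_compat_r; [lra|]. nra. }
  lra.
Qed.

Lemma smooth_diff Om f l r t : open_domain Om -> smooth_on Om f -> Om r t ->
  differentiable_pt_lim (Diter l f) r t (Diter (true :: l) f r t) (Diter (false :: l) f r t).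
Proof.
  intros HO Hs H. apply DL1_diff. apply Taylor_Lagrange_2d.
  eapply loc2d_impl; [|apply (open_loc2d Om r t HO H)].
  intros u v Huv. apply (smooth_diff_n Om f Hs 2 l u v Huv).
Qed.

Lemma chain Om f l X t v : open_domain Om -> smooth_on Om f -> Om (X t) t ->
  is_derive X t v ->
  is_derive (fun s => Diter l f (X s) s) t
     (Diter (true :: l) f (X t) t * v + Diter (false :: l) f (X t) t * 1).
Proof.
  intros HO Hs H HX. apply is_derive_Reals.
  apply (derivable_pt_lim_comp_2d (Diter l f) X (fun s => s)).
  - apply (smooth_diff Om); auto.
  - apply is_derive_Reals; exact HX.
  - apply derivable_pt_lim_id.
Qed.

Lemma schwarz Om f r t : open_domain Om -> smooth_on Om f -> Om r t ->
  Dr (Dt f) r t = Dt (Dr f) r t.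
Proof.
  intros HO Hs H. unfold Dr, Dt. apply Schwarz.
  - eapply loc2d_impl; [|apply (open_loc2d Om r t HO H)].
    intros u v Huv.
    destruct (Hs nil u v Huv) as [A1 [A2 _]].
    destruct (Hs (false :: nil) u v Huv) as [B1 _].
    destruct (Hs (true :: nil) u v Huv) as [_ [C2 _]].
    repeat split; assumption.
  - apply continuity_2d_pt_filterlim. apply (Hs (true :: false :: nil) r t H).
  - apply continuity_2d_pt_filterlim. apply (Hs (false :: true :: nil) r t H).
Qed.

Lemma loc_r (Om : R -> R -> Prop) r t : open_domain Om -> Om r t -> locally r (fun s => Om s t).
Proof. intros HO H. apply (locally_2d_1d_const_y Om). apply open_loc2d; auto. Qed.
Lemma loc_t (Om : R -> R -> Prop) r t : open_domain Om -> Om r t -> locally t (fun s => Om r s).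
Proof. intros HO H. apply (locally_2d_1d_const_x Om). apply open_loc2d; auto. Qed.

Lemma sm_r Om f l r t : smooth_on Om f -> Om r t -> ex_derive (fun s => Diter l f s t) r.
Proof. intros Hs H. apply (Hs l r t H). Qed.
Lemma sm_t Om f l r t : smooth_on Om f -> Om r t -> ex_derive (fun s => Diter l f r s) t.
Proof. intros Hs H. apply (Hs l r t H). Qed.

Lemma pow_pred_eq (m : nat) r : r <> 0 -> INR m * r ^ Init.Nat.pred m = INR m * r ^ m / r.
Proof. intros Hr. destruct m; simpl. field; auto. field; auto. Qed.

Lemma pde1 m K Om rho u : open_domain Om -> (forall r t, Om r t -> 0 < r) ->
  smooth_on Om rho -> smooth_on Om u -> (forall r t, Om r t -> 0 < rho r t) ->
  euler_solution m K 3 Om rho u ->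
  forall r t, Om r t ->
  Dt rho r t = - (INR m * rho r t * u r t / r) - Dr rho r t * u r t - rho r t * Dr u r t /\
  Dt u r t = - (u r t * Dr u r t) - 3 * K * rho r t * Dr rho r t.
Proof.
  intros HO Hr Hrs Hus Hrp He r t H.
  pose proof (Hr r t H) as r0. pose proof (Hrp r t H) as p0.
  assert (Hrm : 0 < r ^ m) by (apply pow_lt; auto).
  pose proof (sm_r Om rho nil r t Hrs H) as a1. pose proof (sm_t Om rho nil r t Hrs H) as a2.
  pose proof (sm_r Om u nil r t Hus H) as a3. pose proof (sm_t Om u nil r t Hus H) as a4.
  simpl in a1, a2, a3, a4.
  destruct (He r t H) as [E1 E2].
  assert (D1 : Dt (fun r t => r ^ m * rho r t) r t = r ^ m * Dt rho r t).
  { unfold Dt. apply is_derive_unique. auto_derive; [auto|ring]. }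
  assert (D2 : Dr (fun r t => r ^ m * rho r t * u r t) r t =
     INR m * r ^ m / r * rho r t * u r t + r ^ m * (Dr rho r t * u r t + rho r t * Dr u r t)).
  { unfold Dr. apply is_derive_unique. auto_derive; [auto|]. rewrite pow_pred_eq by lra. ring. }
  assert (D3 : Dt (fun r t => r ^ m * rho r t * u r t) r t =
     r ^ m * (Dt rho r t * u r t + rho r t * Dt u r t)).
  { unfold Dt. apply is_derive_unique. auto_derive; [auto|ring]. }
  assert (D4 : Dr (fun r t => r ^ m * rho r t * u r t ^ 2) r t =
     INR m * r ^ m / r * rho r t * u r t ^ 2 + r ^ m * (Dr rho r t * u r t ^ 2 + 2 * rho r t * u r t * Dr u r t)).
  { unfold Dr. apply is_derive_unique. auto_derive; [auto|]. rewrite pow_pred_eq by lra. simpl; ring. }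
  assert (D5 : Dr (pressure K 3 rho) r t = 3 * K * rho r t ^ 2 * Dr rho r t).
  { unfold Dr, pressure.
    rewrite (Derive_ext_loc _ (fun s => K * (rho s t) ^ 3)).
    - apply is_derive_unique. auto_derive; [auto|simpl; ring].
    - generalize (loc_r Om r t HO H). apply filter_imp. intros s Hs.
      replace 3 with (INR 3) by (simpl; ring). rewrite Rpower_pow; auto. }
  rewrite D1, D2 in E1. rewrite D3, D4, D5 in E2.
  assert (F1 : Dt rho r t = - (INR m * rho r t * u r t / r) - Dr rho r t * u r t - rho r t * Dr u r t).
  { apply Rmult_eq_reg_l with (r ^ m); [|lra].
    replace (r ^ m * (- (INR m * rho r t * u r t / r) - Dr rho r t * u r t - rho r t * Dr u r t))
      with (r ^ m * Dt rho r t - (r ^ m * Dt rho r t + (INR m * r ^ m / r * rho r t * u r t +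
              r ^ m * (Dr rho r t * u r t + rho r t * Dr u r t)))) by (field; lra).
    lra. }
  split; [exact F1|].
  rewrite F1 in E2.
  apply Rmult_eq_reg_l with (r ^ m * rho r t); [|apply Rgt_not_eq, Rmult_lt_0_compat; auto].
  replace (r ^ m * rho r t * (- (u r t * Dr u r t) - 3 * K * rho r t * Dr rho r t))
     with (r ^ m * rho r t * Dt u r t - (r ^ m * ((- (INR m * rho r t * u r t / r) - Dr rho r t * u r t - rho r t * Dr u r t) * u r t + rho r t * Dt u r t) +
     (INR m * r ^ m / r * rho r t * u r t ^ 2 +
      r ^ m * (Dr rho r t * u r t ^ 2 + 2 * rho r t * u r t * Dr u r t)) +
     r ^ m * (3 * K * rho r t ^ 2 * Dr rho r t))) by (field; lra).
  lra.
Qed.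

Lemma pde2 m K Om rho u : open_domain Om -> (forall r t, Om r t -> 0 < r) ->
  smooth_on Om rho -> smooth_on Om u -> (forall r t, Om r t -> 0 < rho r t) ->
  euler_solution m K 3 Om rho u ->
  forall r t, Om r t ->
  Dt (Dr rho) r t = - (INR m * (Dr rho r t * u r t + rho r t * Dr u r t) / r)
     + INR m * rho r t * u r t / (r * r) - Dr (Dr rho) r t * u r t
     - 2 * Dr rho r t * Dr u r t - rho r t * Dr (Dr u) r t /\
  Dt (Dr u) r t = - (Dr u r t * Dr u r t) - u r t * Dr (Dr u) r t
     - 3 * K * (Dr rho r t * Dr rho r t + rho r t * Dr (Dr rho) r t).
Proof.
  intros HO Hr Hrs Hus Hrp He r t H.
  pose proof (Hr r t H) as r0.
  pose proof (sm_r Om rho nil r t Hrs H) as a1.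
  pose proof (sm_r Om u nil r t Hus H) as a3.
  pose proof (sm_r Om rho (true :: nil) r t Hrs H) as a5.
  pose proof (sm_r Om u (true :: nil) r t Hus H) as a6.
  simpl in a1, a3, a5, a6.
  split.
  - rewrite <- (schwarz Om); auto. unfold Dr at 1.
    rewrite (Derive_ext_loc _ (fun s => - (INR m * rho s t * u s t / s) - Dr rho s t * u s t - rho s t * Dr u s t)).
    + apply is_derive_unique. auto_derive.
      * repeat split; auto; lra.
      * unfold Dr. field. lra.
    + generalize (loc_r Om r t HO H). apply filter_imp. intros s Hs.
      apply (pde1 m K Om rho u); auto.
  - rewrite <- (schwarz Om); auto. unfold Dr at 1.
    rewrite (Derive_ext_loc _ (fun s => - (u s t * Dr u s t) - 3 * K * rho s t * Dr rho s t)).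
    + apply is_derive_unique. auto_derive.
      * repeat split; auto.
      * unfold Dr. ring.
    + generalize (loc_r Om r t HO H). apply filter_imp. intros s Hs.
      apply (pde1 m K Om rho u); auto.
Qed.

Lemma derG (sg s : R) (m : nat) (f1 f2 f3 f4 p : R -> R) t0 d1 d2 d3 d4 dp :
  is_derive f1 t0 d1 -> is_derive f2 t0 d2 -> is_derive f3 t0 d3 ->
  is_derive f4 t0 d4 -> is_derive p t0 dp ->
  p t0 <> 0 -> f4 t0 + sg * (s * f3 t0) <> 0 ->
  is_derive (fun t => f1 t + sg * (s * f2 t) +
       sg * (INR m / p t * (s * f3 t * f4 t) / (f4 t + sg * (s * f3 t)))) t0
    (d1 + sg * (s * d2) + sg * INR m *
      (- dp / (p t0 * p t0) * (s * f3 t0 * f4 t0) / (f4 t0 + sg * (s * f3 t0))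
       + ((s * (d3 * f4 t0 + f3 t0 * d4)) * (f4 t0 + sg * (s * f3 t0))
          - (s * f3 t0 * f4 t0) * (d4 + sg * (s * d3)))
         / (p t0 * (f4 t0 + sg * (s * f3 t0)) * (f4 t0 + sg * (s * f3 t0))))).
Proof.
  intros H1 H2 H3 H4 H5 Hp HD.
  auto_derive.
  - repeat split; try (eexists; eassumption); auto.
  - replace (Derive (fun x : R => f1 x) t0) with d1 by (symmetry; apply is_derive_unique; exact H1).
    replace (Derive (fun x : R => f2 x) t0) with d2 by (symmetry; apply is_derive_unique; exact H2).
    replace (Derive (fun x : R => f3 x) t0) with d3 by (symmetry; apply is_derive_unique; exact H3).
    replace (Derive (fun x : R => f4 x) t0) with d4 by (symmetry; apply is_derive_unique; exact H4).
    replace (Derive (fun x : R => p x) t0) with dp by (symmetry; apply is_derive_unique; exact H5).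
    field. split; auto.
Qed.

Lemma alg (sg : R) (m : nat) s K P rh u R1 U1 RR UU :
  (sg = 1 \/ sg = -1) -> s * s = 3 * K -> P <> 0 ->
  u + sg * (s * rh) <> 0 -> u - sg * (s * rh) <> 0 ->
  U1 + sg * (s * R1) + sg * (INR m / P * (s * rh * u) / (u + sg * (s * rh))) = 0 ->
  let w := u + sg * (s * rh) in
  let A := - (INR m * rh * u / P) - R1 * u - rh * U1 in
  let B := - (u * U1) - 3 * K * rh * R1 in
  let dA := - (INR m * (R1 * u + rh * U1) / P) + INR m * rh * u / (P * P)
            - RR * u - 2 * R1 * U1 - rh * UU in
  let dB := - (U1 * U1) - u * UU - 3 * K * (R1 * R1 + rh * RR) in
  let d1 := UU * w + dB * 1 in
  let d2 := RR * w + dA * 1 in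
  let d3 := R1 * w + A * 1 in
  let d4 := U1 * w + B * 1 in
  let dp := w in
  (d1 + sg * (s * d2) + sg * INR m *
      (- dp / (P * P) * (s * rh * u) / (u + sg * (s * rh))
       + ((s * (d3 * u + rh * d4)) * (u + sg * (s * rh))
          - (s * rh * u) * (d4 + sg * (s * d3)))
         / (P * (u + sg * (s * rh)) * (u + sg * (s * rh)))))
  = INR m * (u - sg * (s * rh)) ^ 2 *
      (U1 - sg * (s * R1) - sg * (INR m / P * (s * rh * u) / (u - sg * (s * rh))))
      / (2 * P * (u + sg * (s * rh))).
Proof.
  intros Hsg Hs HP Hw Hz HU.
  assert (HU' : U1 = - sg * (s * R1) - sg * (INR m / P * (s * rh * u) / (u + sg * (s * rh))))
    by lra.
  subst U1. clear HU.
  assert (HK : K = s * s / 3) by lra. subst K.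
  cbv zeta.
  destruct Hsg as [-> | ->]; field; repeat split; auto; lra.
Qed.

Lemma hh_eq K Om (rho : R -> R -> R) r t : (forall r t, Om r t -> 0 < rho r t) -> Om r t ->
  hh K 3 rho r t = sqrt (K * 3) * rho r t.
Proof.
  intros Hp H. unfold hh. replace ((3 - 1) / 2) with 1 by field.
  rewrite Rpower_1; auto.
Qed.

Lemma Dhh_eq K Om (rho : R -> R -> R) r t : open_domain Om ->
  (forall r t, Om r t -> 0 < rho r t) -> Om r t ->
  Dr (hh K 3 rho) r t = sqrt (K * 3) * Dr rho r t.
Proof.
  intros HO Hp H. unfold Dr.
  rewrite (Derive_ext_loc _ (fun s => sqrt (K * 3) * rho s t)).
  - apply Derive_scal.
  - generalize (loc_r Om r t HO H). apply filter_imp. intros s Hs.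
    apply (hh_eq K Om); auto.
Qed.

Lemma loc_int a b t0 : a < t0 < b -> locally t0 (fun t => a < t < b).
Proof.
  intros [H1 H2].
  assert (Hp : 0 < Rmin (t0 - a) (b - t0)) by (apply Rmin_pos; lra).
  exists (mkposreal _ Hp). intros y Hy.
  change (Rabs (y - t0) < Rmin (t0 - a) (b - t0)) in Hy.
  pose proof (Rmin_l (t0 - a) (b - t0)). pose proof (Rmin_r (t0 - a) (b - t0)).
  apply Rabs_def2 in Hy. lra.
Qed.

Definition W (sg : R) (m : nat) K (rho u : R -> R -> R) : R -> R -> R :=
  fun r t => Dr u r t + sg * (2 / (3 - 1) * Dr (hh K 3 rho) r t)
    + sg * (INR m / r * (hh K 3 rho r t * u r t) / (u r t + sg * hh K 3 rho r t)).

Lemma key sg m K Om rho u : open_domain Om -> (forall r t, Om r t -> 0 < r) ->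
  smooth_on Om rho -> smooth_on Om u -> (forall r t, Om r t -> 0 < rho r t) ->
  euler_solution m K 3 Om rho u -> 0 < K ->
  (sg = 1 \/ sg = -1) ->
  (forall r t, Om r t -> u r t + sg * hh K 3 rho r t <> 0 /\ u r t - sg * hh K 3 rho r t <> 0) ->
  forall X a b t0,
  (forall t, a < t < b -> Om (X t) t /\ is_derive X t (u (X t) t + sg * hh K 3 rho (X t) t)) ->
  a < t0 < b -> W sg m K rho u (X t0) t0 = 0 ->
  is_derive (fun t => W sg m K rho u (X t) t) t0
   (INR m * (u (X t0) t0 - sg * hh K 3 rho (X t0) t0) ^ 2 * W (- sg) m K rho u (X t0) t0
     / (2 * X t0 * (u (X t0) t0 + sg * hh K 3 rho (X t0) t0))).
Proof.
  intros HO Hr Hrs Hus Hrp He HK Hsg Hnz X a b t0 HX Ht0 HW0.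
  destruct (HX t0 Ht0) as [HOm0 HXd].
  set (s := sqrt (K * 3)).
  set (P := X t0) in *.
  pose proof (chain Om u (true :: nil) X t0 _ HO Hus HOm0 HXd) as c1.
  pose proof (chain Om rho (true :: nil) X t0 _ HO Hrs HOm0 HXd) as c2.
  pose proof (chain Om rho nil X t0 _ HO Hrs HOm0 HXd) as c3.
  pose proof (chain Om u nil X t0 _ HO Hus HOm0 HXd) as c4.
  cbn [Diter] in c1, c2, c3, c4. fold P in c1, c2, c3, c4.
  assert (HP0 : P <> 0) by (pose proof (Hr _ _ HOm0); lra).
  destruct (Hnz _ _ HOm0) as [Hw Hz].
  rewrite (hh_eq K Om rho) in Hw, Hz, HXd, c1, c2, c3, c4 by auto. fold s in Hw, Hz, HXd, c1, c2, c3, c4.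
  pose proof (derG sg s m (fun t => Dr u (X t) t) (fun t => Dr rho (X t) t)
     (fun t => rho (X t) t) (fun t => u (X t) t) X t0 _ _ _ _ _ c1 c2 c3 c4 HXd HP0 Hw) as HG.
  destruct (pde1 m K Om rho u HO Hr Hrs Hus Hrp He P t0 HOm0) as [e1 e2].
  destruct (pde2 m K Om rho u HO Hr Hrs Hus Hrp He P t0 HOm0) as [e3 e4].
  rewrite e1, e2, e3, e4 in HG.
  assert (Hs : s * s = 3 * K).
  { unfold s. rewrite sqrt_sqrt; lra. }
  assert (HU : Dr u P t0 + sg * (s * Dr rho P t0) +
      sg * (INR m / P * (s * rho P t0 * u P t0) / (u P t0 + sg * (s * rho P t0))) = 0).
  { rewrite <- HW0. unfold W. rewrite (hh_eq K Om rho), (Dhh_eq K Om rho) by auto. fold s.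
    replace (2 / (3 - 1)) with 1 by field. unfold P. field; auto. }
  pose proof (alg sg m s K P (rho P t0) (u P t0) (Dr rho P t0) (Dr u P t0)
     (Dr (Dr rho) P t0) (Dr (Dr u) P t0) Hsg Hs HP0 Hw Hz HU) as Ha.
  cbv zeta in Ha.
  assert (Et : INR m * (u P t0 - sg * hh K 3 rho P t0) ^ 2 * W (- sg) m K rho u P t0 /
      (2 * P * (u P t0 + sg * hh K 3 rho P t0)) =
      INR m * (u P t0 - sg * (s * rho P t0)) ^ 2 *
      (Dr u P t0 - sg * (s * Dr rho P t0) -
       sg * (INR m / P * (s * rho P t0 * u P t0) / (u P t0 - sg * (s * rho P t0)))) /
      (2 * P * (u P t0 + sg * (s * rho P t0)))).
  { unfold W. rewrite (hh_eq K Om rho), (Dhh_eq K Om rho) by auto. fold s.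
    replace (2 / (3 - 1)) with 1 by field. fold P.
    replace (u P t0 + - sg * (s * rho P t0)) with (u P t0 - sg * (s * rho P t0)) by ring.
    field. auto. }
  rewrite Et, <- Ha.
  apply (is_derive_ext_loc (fun t => Dr u (X t) t + sg * (s * Dr rho (X t) t) +
     sg * (INR m / X t * (s * rho (X t) t * u (X t) t) /
      (u (X t) t + sg * (s * rho (X t) t))))).
  2: exact HG.
  generalize (loc_int a b t0 Ht0). apply filter_imp. intros t Ht.
  destruct (HX t Ht) as [HOt _].
  destruct (Hnz _ _ HOt) as [Hwt _].
  pose proof (Hr _ _ HOt).
  unfold W. rewrite (hh_eq K Om rho), (Dhh_eq K Om rho) by auto. fold s.
  rewrite (hh_eq K Om rho) in Hwt by auto. fold s in Hwt.
  replace (2 / (3 - 1)) with 1 by field. rewrite Rmult_1_l. reflexivity.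
Qed.

Lemma no_up (g : R -> R) t d eps : is_derive g t d -> d < 0 -> g t = 0 -> 0 < eps ->
  (forall s, t < s < t + eps -> 0 < g s) -> False.
Proof.
  intros H Hd Hg He Hafter.
  apply is_derive_Reals in H.
  assert (Hp : 0 < - d / 2) by lra.
  destruct (H (- d / 2) Hp) as [delta Hdel].
  assert (Hm : 0 < Rmin delta eps) by (apply Rmin_pos; [apply cond_pos|lra]).
  pose proof (Rmin_l delta eps). pose proof (Rmin_r delta eps).
  set (h := Rmin delta eps / 2).
  assert (Hh : 0 < h) by (unfold h; lra).
  specialize (Hdel h ltac:(lra)).
  rewrite Rabs_right in Hdel by lra.
  specialize (Hdel ltac:(unfold h; lra)).
  assert (Hgp : 0 < g (t + h)) by (apply Hafter; unfold h; lra).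
  rewrite Hg in Hdel.
  assert (0 < (g (t + h) - 0) / h) by (apply Rdiv_lt_0_compat; lra).
  pose proof (Rle_abs ((g (t + h) - 0) / h - d)).
  lra.
Qed.

Lemma no_down (g : R -> R) t d eps : is_derive g t d -> 0 < d -> g t = 0 -> 0 < eps ->
  (forall s, t < s < t + eps -> g s < 0) -> False.
Proof.
  intros H Hd Hg He Hafter.
  apply (no_up (fun s => - g s) t (- d) eps).
  - apply is_derive_Reals. apply derivable_pt_lim_opp. apply is_derive_Reals. exact H.
  - lra.
  - rewrite Hg; ring.
  - exact He.
  - intros s Hs. specialize (Hafter s Hs). lra.
Qed.

Lemma div_pn N D : 0 < N -> D < 0 -> N / D < 0.
Proof.
  intros. replace (N / D) with (- (N / - D)) by (field; lra).
  assert (0 < N / - D) by (apply Rdiv_lt_0_compat; lra). lra.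
Qed.
Lemma div_nn N D : N < 0 -> D < 0 -> 0 < N / D.
Proof.
  intros. replace (N / D) with ((- N) / - D) by (field; lra).
  apply Rdiv_lt_0_compat; lra.
Qed.

Lemma alpha_W m K rho u r t : alpha m K 3 rho u r t = W 1 m K rho u r t.
Proof.
  unfold alpha, W, speed2. rewrite !Rmult_1_l. reflexivity.
Qed.
Lemma beta_W m K rho u r t : beta m K 3 rho u r t = W (- 1) m K rho u r t.
Proof.
  unfold beta, W, speed1.
  replace (u r t + - 1 * hh K 3 rho r t) with (u r t - hh K 3 rho r t) by ring.
  ring.
Qed.

Theorem mainTheorem5
  (m : nat) (K : R) (Om : R -> R -> Prop) (rho u : R -> R -> R)
  (Hm : m = 1%nat \/ m = 2%nat) (HK : 0 < K)
  (HOm : open_domain Om) (HOm_pos : forall r t, Om r t -> 0 < r)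
  (Hrho_s : smooth_on Om rho) (Hu_s : smooth_on Om u)
  (Hrho_pos : forall r t, Om r t -> 0 < rho r t)
  (Heuler : euler_solution m K 3 Om rho u)
  (Hsuper : forall r t, Om r t ->
     speed1 K 3 rho u r t < speed2 K 3 rho u r t /\ speed2 K 3 rho u r t < 0) :
  (* (i) 1-wave R  ==> 2-wave can only change from R to C *)
  (forall r0 a b psi tstar eps,
     char_curve (speed2 K 3 rho u) Om r0 a b psi ->
     a <= tstar - eps -> tstar + eps <= b ->
     0 < beta m K 3 rho u (psi tstar) tstar ->
     ~ change_C_to_R (fun t => alpha m K 3 rho u (psi t) t) tstar eps) /\
  (* (i) 2-wave R  ==> 1-wave can only change from R to C *)
  (forall r0 a b xi tstar eps,
     char_curve (speed1 K 3 rho u) Om r0 a b xi ->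
     a <= tstar - eps -> tstar + eps <= b ->
     0 < alpha m K 3 rho u (xi tstar) tstar ->
     ~ change_C_to_R (fun t => beta m K 3 rho u (xi t) t) tstar eps) /\
  (* (ii) 1-wave C  ==> 2-wave can only change from C to R *)
  (forall r0 a b psi tstar eps,
     char_curve (speed2 K 3 rho u) Om r0 a b psi ->
     a <= tstar - eps -> tstar + eps <= b ->
     beta m K 3 rho u (psi tstar) tstar < 0 ->
     ~ change_R_to_C (fun t => alpha m K 3 rho u (psi t) t) tstar eps) /\
  (* (ii) 2-wave C  ==> 1-wave can only change from C to R *)
  (forall r0 a b xi tstar eps,
     char_curve (speed1 K 3 rho u) Om r0 a b xi ->
     a <= tstar - eps -> tstar + eps <= b ->
     alpha m K 3 rho u (xi tstar) tstar < 0 ->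
     ~ change_R_to_C (fun t => beta m K 3 rho u (xi t) t) tstar eps).
Proof.
  assert (Hmpos : 0 < INR m) by (destruct Hm as [-> | ->]; simpl; lra).
  assert (Hs1 : forall r t, Om r t ->
     u r t - hh K 3 rho r t < u r t + hh K 3 rho r t /\ u r t + hh K 3 rho r t < 0).
  { intros r t H. exact (Hsuper r t H). }
  assert (Nz1 : forall r t, Om r t -> u r t + 1 * hh K 3 rho r t <> 0 /\ u r t - 1 * hh K 3 rho r t <> 0).
  { intros r t H. destruct (Hs1 r t H). split; lra. }
  assert (Nz2 : forall r t, Om r t -> u r t + - 1 * hh K 3 rho r t <> 0 /\ u r t - - 1 * hh K 3 rho r t <> 0).
  { intros r t H. destruct (Hs1 r t H). split; lra. }
  assert (S1 : (1 = 1 \/ 1 = -1)) by (left; reflexivity).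
  assert (S2 : (- 1 = 1 \/ - 1 = -1)) by (right; ring).
  assert (K1 : forall r0 a b psi t0, char_curve (speed2 K 3 rho u) Om r0 a b psi -> a < t0 < b ->
      alpha m K 3 rho u (psi t0) t0 = 0 ->
      is_derive (fun t => alpha m K 3 rho u (psi t) t) t0
        (INR m * (u (psi t0) t0 - 1 * hh K 3 rho (psi t0) t0) ^ 2 * beta m K 3 rho u (psi t0) t0
          / (2 * psi t0 * (u (psi t0) t0 + 1 * hh K 3 rho (psi t0) t0)))).
  { intros r0 a b psi t0 [_ [_ Hc]] Ht0 H0.
    rewrite beta_W.
    apply (is_derive_ext (fun t => W 1 m K rho u (psi t) t)).
    { intros t. symmetry. apply alpha_W. }
    replace (- 1) with (- (1)) by ring.
    apply (key 1 m K Om rho u HOm HOm_pos Hrho_s Hu_s Hrho_pos Heuler HK S1 Nz1 psi a b t0); auto.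
    - intros t Ht. destruct (Hc t Ht) as [H1 H2]. split; auto.
      replace (u (psi t) t + 1 * hh K 3 rho (psi t) t) with (speed2 K 3 rho u (psi t) t)
        by (unfold speed2; ring). exact H2.
    - rewrite <- alpha_W. exact H0. }
  assert (K2 : forall r0 a b xi t0, char_curve (speed1 K 3 rho u) Om r0 a b xi -> a < t0 < b ->
      beta m K 3 rho u (xi t0) t0 = 0 ->
      is_derive (fun t => beta m K 3 rho u (xi t) t) t0
        (INR m * (u (xi t0) t0 - - 1 * hh K 3 rho (xi t0) t0) ^ 2 * alpha m K 3 rho u (xi t0) t0
          / (2 * xi t0 * (u (xi t0) t0 + - 1 * hh K 3 rho (xi t0) t0)))).
  { intros r0 a b xi t0 [_ [_ Hc]] Ht0 H0.
    rewrite alpha_W.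
    apply (is_derive_ext (fun t => W (- 1) m K rho u (xi t) t)).
    { intros t. symmetry. apply beta_W. }
    replace (W 1 m K rho u (xi t0) t0) with (W (- (- 1)) m K rho u (xi t0) t0) by (f_equal; ring).
    apply (key (- 1) m K Om rho u HOm HOm_pos Hrho_s Hu_s Hrho_pos Heuler HK S2 Nz2 xi a b t0); auto.
    - intros t Ht. destruct (Hc t Ht) as [H1 H2]. split; auto.
      replace (u (xi t) t + - 1 * hh K 3 rho (xi t) t) with (speed1 K 3 rho u (xi t) t)
        by (unfold speed1; ring). exact H2.
    - rewrite <- beta_W. exact H0. }
  split; [|split; [|split]].
  - intros r0 a b psi tstar eps Hc Ha Hb Hbeta [He [H0 [_ Hafter]]].
    cbv beta in H0, Hafter.
    assert (Ht : a < tstar < b) by lra.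
    pose proof (K1 r0 a b psi tstar Hc Ht H0) as HD.
    destruct Hc as [c1 [c2 c3]]. destruct (c3 tstar Ht) as [HO _].
    destruct (Hs1 _ _ HO) as [h1 h2]. pose proof (HOm_pos _ _ HO).
    apply (no_up _ tstar _ eps HD); auto.
    apply div_pn; [|nra].
    assert (0 < (u (psi tstar) tstar - 1 * hh K 3 rho (psi tstar) tstar) ^ 2) by (simpl; nra).
    apply Rmult_lt_0_compat; [apply Rmult_lt_0_compat|]; auto.
  - intros r0 a b xi tstar eps Hc Ha Hb Hal [He [H0 [_ Hafter]]].
    cbv beta in H0, Hafter.
    assert (Ht : a < tstar < b) by lra.
    pose proof (K2 r0 a b xi tstar Hc Ht H0) as HD.
    destruct Hc as [c1 [c2 c3]]. destruct (c3 tstar Ht) as [HO _].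
    destruct (Hs1 _ _ HO) as [h1 h2]. pose proof (HOm_pos _ _ HO).
    apply (no_up _ tstar _ eps HD); auto.
    apply div_pn; [|nra].
    assert (0 < (u (xi tstar) tstar - - 1 * hh K 3 rho (xi tstar) tstar) ^ 2) by (simpl; nra).
    apply Rmult_lt_0_compat; [apply Rmult_lt_0_compat|]; auto.
  - intros r0 a b psi tstar eps Hc Ha Hb Hbeta [He [H0 [_ Hafter]]].
    cbv beta in H0, Hafter.
    assert (Ht : a < tstar < b) by lra.
    pose proof (K1 r0 a b psi tstar Hc Ht H0) as HD.
    destruct Hc as [c1 [c2 c3]]. destruct (c3 tstar Ht) as [HO _].
    destruct (Hs1 _ _ HO) as [h1 h2]. pose proof (HOm_pos _ _ HO).
    apply (no_down _ tstar _ eps HD); auto.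
    apply div_nn; [|nra].
    assert (0 < (u (psi tstar) tstar - 1 * hh K 3 rho (psi tstar) tstar) ^ 2) by (simpl; nra).
    assert (0 < INR m * (u (psi tstar) tstar - 1 * hh K 3 rho (psi tstar) tstar) ^ 2)
      by (apply Rmult_lt_0_compat; auto).
    nra.
  - intros r0 a b xi tstar eps Hc Ha Hb Hal [He [H0 [_ Hafter]]].
    cbv beta in H0, Hafter.
    assert (Ht : a < tstar < b) by lra.
    pose proof (K2 r0 a b xi tstar Hc Ht H0) as HD.
    destruct Hc as [c1 [c2 c3]]. destruct (c3 tstar Ht) as [HO _].
    destruct (Hs1 _ _ HO) as [h1 h2]. pose proof (HOm_pos _ _ HO).
    apply (no_down _ tstar _ eps HD); auto.
    apply div_nn; [|nra].
    assert (0 < (u (xi tstar) tstar - - 1 * hh K 3 rho (xi tstar) tstar) ^ 2) by (simpl; nra).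
    assert (0 < INR m * (u (xi tstar) tstar - - 1 * hh K 3 rho (xi tstar) tstar) ^ 2)
      by (apply Rmult_lt_0_compat; auto).
    nra.
Qed.
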